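(* Let $G$ be a group, $\hat\phi$ a quasimorphism on $G$, and $\hat\phi_{\mathrm h}$ its homogenization. Set $D'_G(\hat\phi)=\sup\{|\hat\phi(g_1g_2g_1^{-1})-\hat\phi(g_2)|: g_1,g_2\in G\}$. Then $D(\hat\phi_{\mathrm h})\le D(\hat\phi)+\tfrac12D'_G(\hat\phi)$.
   Context: A quasimorphism on $G$ is $\hat\phi\colon G\to\mathbb{R}$ with finite defect $D(\hat\phi)=\sup_{g_1,g_2\in G}|\hat\phi(g_1g_2)-\hat\phi(g_1)-\hat\phi(g_2)|$. Its homogenization is $\hat\phi_{\mathrm h}(g)=\lim_{n\to\infty}\hat\phi(g^n)/n$, the unique homogeneous quasimorphism (i.e. $\hat\phi_{\mathrm h}(g^n)=n\hat\phi_{\mathrm h}(g)$ for all $n\in\mathbb{Z}$) at bounded distance from $\hat\phi$. *)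

(* Defs.v *)
From HB Require Import structures.
From mathcomp Require Import all_boot all_order all_algebra.
From mathcomp Require Import all_classical all_reals all_analysis.
Set Implicit Arguments. Unset Strict Implicit. Unset Printing Implicit Defensive.
Import Order.TTheory GRing.Theory Num.Theory numFieldNormedType.Exports.
Local Open Scope classical_set_scope.
Local Open Scope ring_scope.

Definition defect_set (G : groupType) (R : realType) (phi : G -> R) : set R :=
  [set r | exists g1 g2 : G, r = `| phi (g1 * g2)%g - phi g1 - phi g2 |].

Definition quasimorphism (G : groupType) (R : realType) (phi : G -> R) : Prop :=
  has_ubound (defect_set phi).

Definition defect (G : groupType) (R : realType) (phi : G -> R) : R :=
  sup (defect_set phi).

Definition conj_defect (G : groupType) (R : realType) (phi : G -> R) : R :=
  sup [set r | exists g1 g2 : G, r = `| phi (g1 * g2 * g1^-1)%g - phi g2 |].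

Definition homogenization (G : groupType) (R : realType) (phi : G -> R) : G -> R :=
  fun g => limn (fun n : nat => phi (g ^+ n)%g / n%:R : R).

(* Main.v *)
Require Import Defs.
From HB Require Import structures.
From mathcomp Require Import all_boot all_order all_algebra.
From mathcomp Require Import all_classical all_reals all_analysis.
From mathcomp Require Import lra ring.
Import Order.TTheory GRing.Theory Num.Theory numFieldNormedType.Exports.
Local Open Scope ring_scope.

Section Quasi.
Variables (G : groupType) (R : realType) (phi : G -> R).
Hypothesis Hq : quasimorphism phi.

Let D := defect phi.
Let D' := conj_defect phi.

Ltac nrm H := move: H; rewrite ler_norml => /andP[].

Lemma L0 (x y : G) : `|phi (x * y)%g - phi x - phi y| <= D.
Proof. by apply: (ub_le_sup Hq); exists x, y. Qed.

Lemma D_ge0 : 0 <= D.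
Proof. exact: le_trans (normr_ge0 _) (L0 1%g 1%g). Qed.

Lemma Lphi1 : `|phi 1%g| <= D.
Proof. by have := L0 1%g 1%g; rewrite mulg1 -normrN; congr (_ <= _); congr `|_|; lra. Qed.

Lemma Linv (x : G) : `|phi x + phi x^-1%g| <= 2 * D.
Proof.
have := L0 x x^-1%g; rewrite mulgV => h1.
have := Lphi1 => h2.
nrm h1 => h1 h1'; nrm h2 => h2 h2'.
rewrite ler_norml; apply/andP; split; lra.
Qed.

Lemma conj_ub : has_ubound [set r | exists g1 g2 : G, r = `| phi (g1 * g2 * g1^-1)%g - phi g2 |].
Proof.
exists (4 * D) => r [x [y ->]].
have := L0 (x * y)%g x^-1%g; have := L0 x y; have := Linv x => h1 h2 h3.
nrm h1 => h1 h1'; nrm h2 => h2 h2'; nrm h3 => h3 h3'.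
rewrite ler_norml; apply/andP; split; lra.
Qed.

Lemma L1 (x y : G) : `|phi (x * y * x^-1)%g - phi y| <= D'.
Proof. by apply: (ub_le_sup conj_ub); exists x, y. Qed.

Lemma D'_ge0 : 0 <= D'.
Proof. exact: le_trans (normr_ge0 _) (L1 1%g 1%g). Qed.

Definition a (x : G) : R := (phi x - phi x^-1%g) / 2.

Lemma La1 (x y : G) : `|a (x * y)%g - a x - a y| <= D.
Proof.
have := L0 x y; have := L0 y^-1%g x^-1%g => h1 h2.
rewrite /a invgM.
nrm h1 => h1 h1'; nrm h2 => h2 h2'.
rewrite ler_norml; apply/andP; split; lra.
Qed.

Lemma La2 (x : G) : a x^-1%g = - a x.
Proof. rewrite /a invgK; lra. Qed.

Lemma La5 : a 1%g = 0.
Proof. rewrite /a invg1; lra. Qed.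

Lemma La3 (x y : G) : `|a (x * y * x^-1)%g - a y| <= D'.
Proof.
have := L1 x y; have := L1 x y^-1%g => h1 h2.
rewrite /a !invgM !invgK !mulgA.
nrm h1 => h1 h1'; nrm h2 => h2 h2'.
rewrite ler_norml; apply/andP; split; lra.
Qed.

Lemma La4 (x y : G) : `|a (x * y * x^-1 * y^-1)%g| <= D + D'.
Proof.
have := La1 (x * y * x^-1)%g y^-1%g; have := La3 x y => h1 h2.
rewrite La2 in h2.
nrm h1 => h1 h1'; nrm h2 => h2 h2'.
rewrite ler_norml; apply/andP; split; lra.
Qed.

Lemma Laphi (x : G) : `|a x - phi x| <= D.
Proof.
have := Linv x => h1.
rewrite /a.
nrm h1 => h1 h1'.
rewrite ler_norml; apply/andP; split; lra.
Qed.


Lemma Lpow (x : G) (m : nat) :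
  `|phi (x ^+ m.+1)%g - m.+1%:R * phi x| <= m%:R * D.
Proof.
elim: m => [|m IH]; first by rewrite expg1 mul1r subrr normr0 mul0r.
rewrite expgS; have := L0 x (x ^+ m.+1)%g => h1.
nrm h1 => h1 h1'; nrm IH => h2 h2'.
rewrite ler_norml -!natr1; apply/andP; split; lra.
Qed.

Definition u (x : G) (k : nat) : R := phi (x ^+ k)%g / k%:R.

Lemma Lu (x : G) (n m : nat) : (0 < n)%N -> (0 < m)%N ->
  `|u x (n * m) - u x n| <= D / n%:R.
Proof.
move=> n0 m0.
have hn : (n%:R : R) != 0 by rewrite pnatr_eq0 -lt0n.
have hm : (m%:R : R) != 0 by rewrite pnatr_eq0 -lt0n.
have hn' : (0 : R) < n%:R by rewrite ltr0n.
have hm' : (0 : R) < m%:R by rewrite ltr0n.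
have E : u x (n * m) - u x n =
   (phi (x ^+ n ^+ m)%g - m%:R * phi (x ^+ n)%g) / (n%:R * m%:R).
  rewrite /u -expgnA natrM; field; by rewrite ?hn ?hm.
rewrite E normrM normfV [`|n%:R * m%:R|]ger0_norm; last by rewrite mulr_ge0 ?ler0n.
rewrite ler_pdivrMr ?mulr_gt0 //.
have -> : D / n%:R * (n%:R * m%:R) = m%:R * D by field; rewrite ?hn ?hm.
case: m m0 {E hm hm'} => // m _.
apply: le_trans (Lpow _ m) _.
rewrite ler_wpM2r ?D_ge0 // ler_nat //.
Qed.

Lemma Lcauchy (x : G) (n m : nat) : (0 < n)%N -> (0 < m)%N ->
  `|u x n - u x m| <= D / n%:R + D / m%:R.
Proof.
move=> n0 m0.
apply: le_trans (ler_distD (u x (n * m)) _ _) _.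
rewrite distrC; apply: lerD; first exact: Lu.
by rewrite mulnC; apply: Lu.
Qed.


Lemma Lcvg (x : G) : cvgn (u x).
Proof.
apply/cauchy_cvgP; apply: cauchy_exP => e e0.
have hb : 0 <= 2 * D / e by rewrite divr_ge0 ?mulr_ge0 ?D_ge0 ?ltW.
have := archi_boundP hb; set k := Num.Def.archi_bound _ => hk.
exists (u x k.+1); exists k.+1 => // n /= Nn.
rewrite /ball /=.
have n0 : (0 < n)%N by apply: leq_trans Nn.
apply: le_lt_trans (@Lcauchy x k.+1 n (ltn0Sn k) n0) _.
have h1 : D / n%:R <= D / k.+1%:R.
  rewrite ler_wpM2l ?D_ge0 // lef_pV2 ?posrE ?ltr0n ?ler_nat //.
have h2 : 2 * (D / k.+1%:R) < e.
  rewrite mulrA ltr_pdivrMr ?ltr0n // -ltr_pdivrMl // mulrC.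
  by apply: lt_trans hk _; rewrite ltr_nat.
move: h1 h2; set t := D / k.+1%:R; set s := D / n%:R => h1 h2; lra.
Qed.

Definition psi := homogenization phi.

Lemma LpsiN0 (x : G) (N : nat) : (0 < N)%N -> `|psi x - u x N| <= D / N%:R.
Proof.
move=> N0; apply/ler_addgt0Pr => e e0.
have := Lcvg x; move/cvgrPdist_lt/(_ e e0) => [M _ HM].
have HMt : (M <= N * M.+1)%N.
  by apply: leq_trans (leqnSn M) _; rewrite leq_pmull.
have := HM _ HMt => /= h1.
have h2 := @Lu x N M.+1 N0 (ltn0Sn M).
apply: le_trans (ler_distD (u x (N * M.+1)) _ _) _.
rewrite addrC; apply: lerD => //; exact: ltW.
Qed.

Lemma LpsiN (x : G) (N : nat) : (0 < N)%N -> `|N%:R * psi x - phi (x ^+ N)%g| <= D.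
Proof.
move=> N0.
have hn : (N%:R : R) != 0 by rewrite pnatr_eq0 -lt0n.
have hn' : (0 : R) < N%:R by rewrite ltr0n.
have -> : N%:R * psi x - phi (x ^+ N)%g = N%:R * (psi x - u x N).
  by rewrite /u; field; rewrite ?hn.
rewrite normrM ger0_norm ?ler0n // -ler_pdivlMl //.
by rewrite mulrC; apply: LpsiN0.
Qed.


Lemma Zid (g h : G) (n : nat) :
  ((g*h) ^+ n.+2 * (g ^+ n.+2 * h ^+ n.+2)^-1 =
   ((g*h) ^+ n * (g ^+ n * h ^+ n)^-1) *
   ((g ^+ n * h ^+ n * g * h * (g ^+ n)^-1) * (g ^+ n * g * (h ^+ n)^-1 * (g ^+ n)^-1)
    * (g ^+ n * h ^+ n * g * h * (g ^+ n)^-1)^-1 * (g ^+ n * g * (h ^+ n)^-1 * (g ^+ n)^-1)^-1))%g.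
Proof.
rewrite -(addn2 n) !expgnDr !expg2.
move: (g ^+ n)%g (h ^+ n)%g ((g * h) ^+ n)%g (commuteX n (commute_refl h)) => G2 H2 A cH.
rewrite !invgM !invgK !mulgA.
rewrite mulgK; do 6 rewrite mulgVK.
congr (_ / g / g / G2)%g; by rewrite -!mulgA -!invgM cH.
Qed.

Lemma LZ (g h : G) (m : nat) :
  `|a ((g*h) ^+ (2 * m) * (g ^+ (2 * m) * h ^+ (2 * m))^-1)%g| <= m%:R * (2 * D + D').
Proof.
elim: m => [|m IH].
  by rewrite muln0 !expg0 !mul1g invg1 La5 normr0 mul0r.
have -> : (2 * m.+1 = (2 * m).+2)%N by rewrite mulnS.
rewrite Zid.
have h1 := La1 ((g*h) ^+ (2 * m) * (g ^+ (2 * m) * h ^+ (2 * m))^-1)%g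
  ((g ^+ (2 * m) * h ^+ (2 * m) * g * h * (g ^+ (2 * m))^-1) *
   (g ^+ (2 * m) * g * (h ^+ (2 * m))^-1 * (g ^+ (2 * m))^-1) *
   (g ^+ (2 * m) * h ^+ (2 * m) * g * h * (g ^+ (2 * m))^-1)^-1 *
   (g ^+ (2 * m) * g * (h ^+ (2 * m))^-1 * (g ^+ (2 * m))^-1)^-1)%g.
have h2 := La4 (g ^+ (2 * m) * h ^+ (2 * m) * g * h * (g ^+ (2 * m))^-1)%g
   (g ^+ (2 * m) * g * (h ^+ (2 * m))^-1 * (g ^+ (2 * m))^-1)%g.
move: h1 h2 IH.
set K := a (_ * _ * _ * _)%g.
set Z := a ((g * h) ^+ (2 * m) / _)%g.
set ZK := a (_ * _)%g.
move=> h1 h2 IH.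
nrm h1 => h1 h1'; nrm h2 => h2 h2'; nrm IH => h3 h3'.
rewrite ler_norml -natr1; apply/andP; split; lra.
Qed.


Lemma Lkey (g h : G) (m : nat) :
  (2 * m.+1)%:R * `|psi (g*h)%g - psi g - psi h| <= m.+1%:R * (2 * D + D') + 8 * D.
Proof.
set N := (2 * m.+1)%N.
have N0 : (0 < N)%N by rewrite muln_gt0.
have e1 := LpsiN (g*h)%g N N0; have e2 := LpsiN g N N0; have e3 := LpsiN h N N0.
have f1 := Laphi ((g*h)^+N)%g; have f2 := Laphi (g^+N)%g; have f3 := Laphi (h^+N)%g.
have z := LZ g h m.+1.
set W := (g ^+ N * h ^+ N)%g.
have hX : ((g*h)^+N = ((g*h)^+N * W^-1) * W)%g by rewrite mulgVK.
have s1 := La1 ((g*h)^+N * W^-1)%g W; rewrite -hX in s1.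
have s2 := La1 (g^+N)%g (h^+N)%g.
rewrite -[N%:R]ger0_norm ?ler0n // -normrM !mulrBr.
move: e1 e2 e3 f1 f2 f3 z s1 s2.
set P1 := N%:R * psi (g*h)%g; set P2 := N%:R * psi g; set P3 := N%:R * psi h.
set Z := a ((g * h) ^+ N / W)%g.
move=> e1 e2 e3 f1 f2 f3 z s1 s2.
nrm e1 => e1 e1'; nrm e2 => e2 e2'; nrm e3 => e3 e3'.
nrm f1 => f1 f1'; nrm f2 => f2 f2'; nrm f3 => f3 f3'.
nrm z => z z'; nrm s1 => s1 s1'; nrm s2 => s2 s2'.
rewrite ler_norml; apply/andP; split; lra.
Qed.

Lemma Lmain (g h : G) : `|psi (g*h)%g - psi g - psi h| <= D + D' / 2.
Proof.
apply/ler_addgt0Pr => eps eps0.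
have hb : 0 <= 4 * D / eps by rewrite divr_ge0 ?mulr_ge0 ?D_ge0 ?ltW.
have := archi_boundP hb; set k := Num.Def.archi_bound _ => hk.
have key := Lkey g h k.
have hM : 4 * D < k.+1%:R * eps.
  rewrite -ltr_pdivrMr //; apply: lt_trans hk _; by rewrite ltr_nat.
move: key hM; rewrite natrM.
set M := k.+1%:R; set E := `|_ - _ - _|.
have M0 : 0 < M by rewrite ltr0n.
have E0 : 0 <= E by rewrite normr_ge0.
have := D_ge0; have := D'_ge0.
move=> d1 d2 key hM.
nra.
Qed.

End Quasi.

Theorem proposition2p15 (G : groupType) (R : realType) (phi : G -> R) :
  quasimorphism phi ->
  defect (homogenization phi) <= defect phi + conj_defect phi / 2.
Proof.
move=> Hq; apply: ge_sup.
  by exists `|homogenization phi (1 * 1)%g - homogenization phi 1%g - homogenization phi 1%g|; exists 1%g, 1%g.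
by move=> r [g [h ->]]; exact: Lmain.
Qed.
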